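(* For $i=1,2$, let $G_i$ be an $m_i$-$\gamma_t$-critical graph of order $\Delta(G_i)+m_i$ with $\delta(G_i)\ge 2$, and let $v_i\in V(G_i)$ be a vertex of maximum degree $\Delta(G_i)$. Suppose that for each $i$, every connected component of the induced subgraph $G_i[V(G_i)\setminus N[v_i]]$ is isomorphic to the path $P_2$. Then the vertex amalgamation $G$ of $G_1$ and $G_2$ at $v_1$ and $v_2$ is an $(m_1+m_2-1)$-$\gamma_t$-critical graph of order $\Delta(G)+m_1+m_2-1$, where $\Delta(G)=\Delta(G_1)+\Delta(G_2)$.
   Context: All graphs are finite and simple. $N(x)$ is the neighborhood of $x$, $N[x]=N(x)\cup\{x\}$, $G[X]$ the subgraph induced by $X$, $P_k$ the path on $k$ vertices. A set $S\subseteq V(G)$ is a total dominating set if every vertex of $G$ is adjacent to some vertex of $S$; $\gamma_t(G)$ is the minimum size of such a set. A leaf is a vertex of degree one. A graph $G$ with no isolated vertex is $\gamma_t$-critical if for every vertex $v$ not adjacent to a leaf, $\gamma_t(G-v)<\gamma_t(G)$; it is $m$-$\gamma_t$-critical if moreover $\gamma_t(G)=m$. The vertex amalgamation of $G_1$ and $G_2$ at $v_1\in V(G_1)$, $v_2\in V(G_2)$ is the graph with vertex set $(V(G_1)\setminus\{v_1\})\cup(V(G_2)\setminus\{v_2\})\cup\{v\}$ ($v$ a new vertex, the vertex sets of $G_1,G_2$ disjoint) and edge set $E(G_1-v_1)\cup E(G_2-v_2)\cup\{vu: v_1u\in E(G_1)\}\cup\{vw: v_2w\in E(G_2)\}$.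 *)

(* Defs.v *)
From HB Require Import structures.
From mathcomp Require Import all_boot.
Set Implicit Arguments. Unset Strict Implicit. Unset Printing Implicit Defensive.

Record graph := Graph {
  vtx :> finType;
  adj : rel vtx;
  adj_sym : symmetric adj;
  adj_irr : irreflexive adj }.

Section GraphDefs.
Variable G : graph.

Definition nbh (x : G) : {set G} := [set y | adj x y].
Definition cnbh (x : G) : {set G} := x |: nbh x.
Definition deg (x : G) : nat := #|nbh x|.
Definition maxdeg : nat := \max_(x : G) deg x.
Definition is_leaf (x : G) : bool := deg x == 1.

Definition tds_in (A S : {set G}) : bool :=
  (S \subset A) && [forall x in A, [exists y in S, adj x y]].

(* gamma_t(G[A]); the default value #|A|.+1 ("infinity") is only reached
   when G[A] has an isolated vertex, i.e. has no total dominating set. *)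
Definition gammat_in (A : {set G}) : nat :=
  \big[minn/#|A|.+1]_(S : {set G} | tds_in A S) #|S|.

Definition gammat : nat := gammat_in setT.

Definition no_isolated : Prop := forall x : G, 0 < deg x.

Definition gt_critical : Prop :=
  no_isolated /\
  forall v : G, (forall u : G, adj v u -> ~~ is_leaf u) ->
    gammat_in [set~ v] < gammat.

Definition m_gt_critical (m : nat) : Prop := gt_critical /\ gammat = m.

Definition induced_adj (A : {set G}) : rel G :=
  [rel x y | [&& x \in A, y \in A & adj x y]].
Definition component_in (A : {set G}) (x : G) : {set G} :=
  [set y | connect (induced_adj A) x y].

(* every connected component of G[A] is isomorphic to P_2: the component
   of each x in A is {x, y} with x y an edge (a connected graph on two
   vertices is P_2). *)
Definition components_P2 (A : {set G}) : Prop :=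
  forall x, x \in A -> exists y, adj x y /\ component_in A x = [set x; y].

End GraphDefs.

(* Vertex amalgamation of G1 and G2 at v1, v2: vertex set
   (V(G1)\{v1}) + (V(G2)\{v2}) + {v}, with v represented by None. *)
Section Amalgamation.
Variables (G1 G2 : graph) (v1 : G1) (v2 : G2).

Definition amal_vtx : finType :=
  option ({x : G1 | x != v1} + {x : G2 | x != v2}).

Definition amal_adj : rel amal_vtx := fun a b =>
  match a, b with
  | Some (inl x), Some (inl y) => adj (val x) (val y)
  | Some (inr x), Some (inr y) => adj (val x) (val y)
  | None, Some (inl y) => adj v1 (val y)
  | None, Some (inr y) => adj v2 (val y)
  | Some (inl x), None => adj v1 (val x)
  | Some (inr x), None => adj v2 (val x)
  | _, _ => false
  end.

Lemma amal_adj_sym : symmetric amal_adj.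
Proof.
move=> [[x|x]|] [[y|y]|] //=; rewrite ?(adj_sym (val x)) ?(adj_sym (val y)) //.
Qed.

Lemma amal_adj_irr : irreflexive amal_adj.
Proof. by move=> [[x|x]|] //=; rewrite adj_irr. Qed.

Definition amalgamation : graph := Graph amal_adj_sym amal_adj_irr.
End Amalgamation.

(* Main.v *)
Require Import Defs.
From mathcomp Require Import all_boot.
From Stdlib Require Import Lia.
Set Implicit Arguments. Unset Strict Implicit. Unset Printing Implicit Defensive.

Ltac slia := repeat match goal with H : is_true (_ <= _) |- _ => revert H | H : @eq nat _ _ |- _ => revert H end;
  rewrite -?plusE -?minusE -?multE; repeat (let H := fresh in intro H; try move/leP: H => H); try apply/leP; lia.

Section Gen.
Variable G : graph.

Lemma tdsP (A S : {set G}) :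
  reflect (S \subset A /\ forall x, x \in A -> exists2 y, y \in S & adj x y) (tds_in A S).
Proof.
apply: (iffP andP) => [[sub /forallP H]|[sub H]]; split=> //.
- move=> x xA. have /existsP[y /andP[yS xy]] := implyP (H x) xA. by exists y.
- apply/forallP=> x; apply/implyP=> xA. have [y yS xy] := H x xA.
  apply/existsP; exists y; by rewrite yS.
Qed.

Lemma bigmin_le (I : eqType) (r : seq I) (P : pred I) (F : I -> nat) d i :
  i \in r -> P i -> \big[minn/d]_(j <- r | P j) F j <= F i.
Proof.
elim: r => // a r IH; rewrite inE big_cons => /orP[/eqP <- -> | ir Pi]; first exact: geq_minl.
case: (P a); last exact: IH ir Pi.
exact: leq_trans (geq_minr _ _) (IH ir Pi).
Qed.

Lemma gammat_le (A S : {set G}) : tds_in A S -> gammat_in A <= #|S|.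
Proof. move=> H. rewrite /gammat_in. apply: bigmin_le => //. Qed.

Lemma gammat_ge (A : {set G}) k : (forall S, tds_in A S -> k <= #|S|) -> k <= #|A|.+1 -> k <= gammat_in A.
Proof.
move=> H Hk. rewrite /gammat_in. elim/big_ind: _ => //.
  by move=> x y; rewrite leq_min => -> ->.
Qed.

Lemma gammat_lt (A : {set G}) k : gammat_in A < k -> k <= #|A|.+1 ->
  exists S, tds_in A S /\ #|S| < k.
Proof.
move=> H Hk. case: (boolP [exists S : {set G}, tds_in A S && (#|S| < k)]).
  by case/existsP=> S /andP[h1 h2]; exists S.
move/existsPn=> nS. have : k <= gammat_in A.
  apply: gammat_ge => // S hS. have := nS S. by rewrite hS /= -leqNgt.
by rewrite leqNgt H.
Qed.

Lemma P2_eq (A : {set G}) : components_P2 A -> forall c b b',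
  c \in A -> b \in A -> b' \in A -> adj c b -> adj b b' -> b' = c.
Proof.
move=> HP c b b' cA bA b'A cb bb'. have [y [cy Hc]] := HP c cA.
have hb : b \in component_in A c by rewrite inE; apply: connect1; exact/and3P.
have hb' : b' \in component_in A c.
  rewrite inE; apply: (@connect_trans _ _ b); apply: connect1; exact/and3P.
rewrite Hc !inE in hb hb'.
case/orP: hb => /eqP hb; first by subst b; rewrite adj_irr in cb.
subst b. case/orP: hb' => /eqP // hb'. by subst b'; rewrite adj_irr in bb'.
Qed.

Lemma partner (A : {set G}) : components_P2 A -> forall c, c \in A -> exists2 p, p \in A & adj c p.
Proof.
move=> HP c cA. have [y [cy Hc]] := HP c cA. exists y => //.
have : y \in component_in A c by rewrite Hc !inE eqxx orbT.
rewrite inE => /connectP [p pth ->]. move: pth.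
case/lastP: p => [|p z] //=. rewrite rcons_path last_rcons => /andP[_] /=.
by case/and3P.
Qed.

Lemma deg_gt0 (x y : G) : adj x y -> 0 < deg x.
Proof. by move=> h; apply/card_gt0P; exists y; rewrite inE. Qed.

End Gen.

Section Side.
Variables (K H : graph) (v : H) (f : H -> K).
Hypothesis fadj : forall a b, adj (f a) (f b) = adj a b.
Hypothesis finj : injective f.
Hypothesis fother : forall y : K, (exists a, y = f a) \/ (forall a, a != v -> adj (f a) y = false).

Lemma dom_side (S : {set K}) : tds_in setT S -> forall a, a != v -> exists2 b, f b \in S & adj a b.
Proof.
case/tdsP => _ HS a av. have [y yS ay] := HS (f a) (in_setT _).
case: (fother y) => [[b eb]|hy]; last by rewrite hy in ay.
subst y. exists b => //. by rewrite -fadj.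
Qed.

Lemma tds_side (S : {set K}) : tds_in setT S -> (exists2 b, f b \in S & adj v b) ->
  tds_in setT (f @^-1: S).
Proof.
move=> HS Hv. apply/tdsP; split; first exact: subsetT.
move=> a _. case: (eqVneq a v) => [->|av].
  by have [b bS h] := Hv; exists b; rewrite ?inE.
by have [b bS h] := dom_side HS av; exists b; rewrite ?inE.
Qed.

Lemma notN (x : H) : x \in ~: cnbh v -> x != v /\ ~~ adj v x.
Proof. by rewrite !inE negb_or => /andP[-> ->]. Qed.

Lemma Rsub_side (S : {set K}) : components_P2 (~: cnbh v) -> tds_in setT S ->
  (forall b, f b \in S -> ~~ adj v b) -> forall c, c \in ~: cnbh v -> f c \in S.
Proof.
move=> HP HS nd c cR.
have inR b : f b \in S -> b != v -> b \in ~: cnbh v.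
  by move=> bS bv; rewrite !inE negb_or bv nd.
have [cv _] := notN cR. have [b bS cb] := dom_side HS cv.
have bv : b != v.
  apply: contraTneq cb => ->; rewrite adj_sym; exact (notN cR).2.
have bR := inR b bS bv. have [b' b'S bb'] := dom_side HS bv.
have b'v : b' != v.
  apply: contraTneq bb' => ->; rewrite adj_sym; exact (notN bR).2.
have := P2_eq HP cR bR (inR b' b'S b'v) cb bb'. by move=> <-.
Qed.

Lemma side_bound m (S : {set K}) : gammat H = m -> 0 < m -> #|~: cnbh v| = m - 1 ->
  components_P2 (~: cnbh v) -> tds_in setT S ->
  (m - 1 + (f v \in S) <= #|f @^-1: S|) /\
  ((exists2 b, f b \in S & adj v b) -> m <= #|f @^-1: S|).
Proof.
move=> gm m0 cR HP HS.
have P2 : (exists2 b, f b \in S & adj v b) -> m <= #|f @^-1: S|.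
  move=> Hd; rewrite -gm; apply: gammat_le; exact: tds_side.
split=> //.
case: (boolP [exists b, (f b \in S) && adj v b]) => [/existsP [b /andP [h1 h2]]|/existsPn nd].
  have := P2 (ex_intro2 _ _ b h1 h2). case: (f v \in S) => /=; slia.
have nd' : forall b, f b \in S -> ~~ adj v b.
  by move=> b bS; have := nd b; rewrite bS.
have sub : ~: cnbh v \subset f @^-1: S.
  by apply/subsetP => c cR'; rewrite inE; exact: Rsub_side.
case: (boolP (f v \in S)) => hv.
  have sub' : v |: ~: cnbh v \subset f @^-1: S.
    by rewrite subUset sub andbT sub1set inE.
  have := subset_leq_card sub'. rewrite cardsU1 cR !inE eqxx /=. slia.
have := subset_leq_card sub. rewrite cR addn0. slia.
Qed.

Lemma upper_side1 : components_P2 (~: cnbh v) -> forall a, a != v ->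
  exists2 s, s \in f @: (~: cnbh v) :|: [set f v] & adj (f a) s.
Proof.
move=> HP a av. case: (boolP (adj v a)) => hva.
  exists (f v); first by rewrite !inE eqxx orbT.
  by rewrite fadj adj_sym.
have aR : a \in ~: cnbh v by rewrite !inE negb_or av.
have [p pR ap] := partner HP aR.
exists (f p); last by rewrite fadj.
by rewrite inE; apply/orP; left; apply: imset_f.
Qed.

Lemma upper_side2 (x : H) (T : {set H}) : adj v x -> tds_in [set~ x] T ->
  forall b, exists2 s, s \in f @: T :|: [set f v] & adj (f b) s.
Proof.
move=> vx /tdsP [_ HT] b. case: (eqVneq b x) => [->|bx].
  exists (f v); first by rewrite !inE eqxx orbT.
  by rewrite fadj adj_sym.
have bx' : b \in [set~ x] by rewrite !inE.
have [t tT bt] := HT b bx'.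
exists (f t); last by rewrite fadj.
by rewrite inE; apply/orP; left; apply: imset_f.
Qed.

Lemma crit_side (a : H) (T : {set H}) : tds_in [set~ a] T ->
  forall b, b != a -> exists2 s, s \in f @: T & adj (f b) s.
Proof.
move=> /tdsP [_ HT] b ba. have ba' : b \in [set~ a] by rewrite !inE.
have [t tT bt] := HT b ba'.
exists (f t); last by rewrite fadj.
exact: imset_f.
Qed.

Lemma crit_sub (a : H) (T : {set H}) : tds_in [set~ a] T -> forall t, t \in T -> t != a.
Proof. by move=> /tdsP [/subsetP sub _] t /sub; rewrite !inE. Qed.

Lemma deg_side a : a != v -> deg (f a) <= deg a.
Proof.
move=> av. apply: leq_trans (_ : #|f @: nbh a| <= _); last exact: leq_imset_card.
apply: subset_leq_card. apply/subsetP => y. rewrite inE.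
case: (fother y) => [[b ->]|hy]; last by rewrite hy.
by rewrite fadj => ab; apply: imset_f; rewrite inE.
Qed.

End Side.

Section Amal.
Variables (G1 G2 : graph) (v1 : G1) (v2 : G2).
Local Notation G := (amalgamation v1 v2).

Definition f1 (a : G1) : G :=
  if (insub a : option {x : G1 | x != v1}) is Some s then Some (inl s) else None.
Definition f2 (b : G2) : G :=
  if (insub b : option {x : G2 | x != v2}) is Some s then Some (inr s) else None.

Lemma f1P a : (a = v1 /\ f1 a = None) \/ exists s : {x : G1 | x != v1}, val s = a /\ f1 a = Some (inl s).
Proof.
rewrite /f1; case: insubP => [s _ <-|]; first by right; exists s.
by move=> /negbNE/eqP ->; left.
Qed.
Lemma f2P b : (b = v2 /\ f2 b = None) \/ exists s : {x : G2 | x != v2}, val s = b /\ f2 b = Some (inr s).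
Proof.
rewrite /f2; case: insubP => [s _ <-|]; first by right; exists s.
by move=> /negbNE/eqP ->; left.
Qed.

Lemma f1v : f1 v1 = None.
Proof. by case: (f1P v1) => [[_ ->]|[s [e _]]] //; have := valP s; rewrite e eqxx. Qed.
Lemma f2v : f2 v2 = None.
Proof. by case: (f2P v2) => [[_ ->]|[s [e _]]] //; have := valP s; rewrite e eqxx. Qed.
Lemma f1_val s : f1 (val s) = Some (inl s).
Proof. by rewrite /f1 valK. Qed.
Lemma f2_val s : f2 (val s) = Some (inr s).
Proof. by rewrite /f2 valK. Qed.

Lemma adj11 a b : adj (f1 a) (f1 b) = adj a b.
Proof.
case: (f1P a) => [[-> ->]|[s [<- ->]]]; case: (f1P b) => [[-> ->]|[t [<- ->]]] //=;
  by rewrite ?adj_irr // adj_sym.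
Qed.
Lemma adj22 a b : adj (f2 a) (f2 b) = adj a b.
Proof.
case: (f2P a) => [[-> ->]|[s [<- ->]]]; case: (f2P b) => [[-> ->]|[t [<- ->]]] //=;
  by rewrite ?adj_irr // adj_sym.
Qed.
Lemma adj12 a b : a != v1 -> b != v2 -> adj (f1 a) (f2 b) = false.
Proof.
case: (f1P a) => [[-> _]|[s [<- ->]]]; first by rewrite eqxx.
by case: (f2P b) => [[-> _]|[t [<- ->]]]; first by rewrite eqxx.
Qed.

Lemma f1_inj : injective f1.
Proof.
move=> a b; case: (f1P a) => [[-> ->]|[s [<- ->]]]; case: (f1P b) => [[-> ->]|[t [<- ->]]] //.
by case=> ->.
Qed.
Lemma f2_inj : injective f2.
Proof.
move=> a b; case: (f2P a) => [[-> ->]|[s [<- ->]]]; case: (f2P b) => [[-> ->]|[t [<- ->]]] //.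
by case=> ->.
Qed.
Lemma f12_eq a b : f1 a = f2 b -> a = v1 /\ b = v2.
Proof.
case: (f1P a) => [[-> ->]|[s [<- ->]]]; case: (f2P b) => [[-> ->]|[t [<- ->]]] //.
Qed.

Lemma GP (y : G) : (exists a, y = f1 a) \/ (exists2 b, b != v2 & y = f2 b).
Proof.
case: y => [[s|s]|].
- by left; exists (val s); rewrite f1_val.
- by right; exists (val s); [exact: (valP s) | rewrite f2_val].
- by left; exists v1; rewrite f1v.
Qed.

Lemma fother1 (y : G) : (exists a, y = f1 a) \/ (forall a, a != v1 -> adj (f1 a) y = false).
Proof.
case: (GP y) => [h|[b bv ->]]; first by left.
by right=> a av; rewrite adj12.
Qed.
Lemma fother2 (y : G) : (exists a, y = f2 a) \/ (forall a, a != v2 -> adj (f2 a) y = false).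
Proof.
case: y => [[s|s]|].
- right=> a av. have := adj12 (valP s) av. by rewrite f1_val adj_sym.
- by left; exists (val s); rewrite f2_val.
- by left; exists v2; rewrite f2v.
Qed.

Lemma cU (T : finType) (A B : {set T}) : #|A :|: B| <= #|A| + #|B|.
Proof. by rewrite cardsU leq_subr. Qed.

Lemma card_split (S : {set G}) : #|f1 @^-1: S| + #|f2 @^-1: S| <= #|S| + (None \in S).
Proof.
have e1 : #|f1 @: (f1 @^-1: S)| = #|f1 @^-1: S| := card_imset _ f1_inj.
have e2 : #|f2 @: (f2 @^-1: S)| = #|f2 @^-1: S| := card_imset _ f2_inj.
rewrite -e1 -e2 -cardsUI. apply: leq_add.
  apply: subset_leq_card; apply/subsetP => y /setUP [] /imsetP [x]; by rewrite inE => xS ->.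
case: (boolP (None \in S)) => hN.
  apply: leq_trans (subset_leq_card (B := [set None]) _) _; last by rewrite cards1.
  apply/subsetP => y /setIP [/imsetP [x _ ->] /imsetP [x' _ e]].
  have [-> _] := f12_eq e. by rewrite f1v inE.
rewrite leqn0 cards_eq0; apply/eqP/setP => y; rewrite !inE.
apply/negP => /andP [/imsetP [x xS ->] /imsetP [x' _ e]].
have [ex _] := f12_eq e. move: xS; rewrite inE ex f1v. by rewrite (negbTE hN).
Qed.

Lemma domv (S : {set G}) : tds_in setT S ->
  (exists2 b, f1 b \in S & adj v1 b) \/ (exists2 b, f2 b \in S & adj v2 b).
Proof.
case/tdsP => _ H. have [y yS hy] := H None (in_setT _).
case: (GP y) => [[a ey]|[b bv ey]]; subst y.
  by left; exists a => //; rewrite -adj11 f1v.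
by right; exists b => //; rewrite -adj22 f2v.
Qed.

Lemma lower m1 m2 : gammat G1 = m1 -> 0 < m1 -> #|~: cnbh v1| = m1 - 1 -> components_P2 (~: cnbh v1) ->
  gammat G2 = m2 -> 0 < m2 -> #|~: cnbh v2| = m2 - 1 -> components_P2 (~: cnbh v2) ->
  forall S : {set G}, tds_in setT S -> m1 + m2 - 1 <= #|S|.
Proof.
move=> g1 p1 c1 P1 g2 p2 c2 P2 S HS.
have [b1 d1] := side_bound adj11 fother1 g1 p1 c1 P1 HS.
have [b2 d2] := side_bound adj22 fother2 g2 p2 c2 P2 HS.
rewrite f1v in b1; rewrite f2v in b2.
have cs := card_split S.
case: (domv HS) => [/d1|/d2] h; move: (None \in S) b1 b2 cs => e; case: e => /= b1 b2 cs; move: (#|f1 @^-1: S|) (#|f2 @^-1: S|) (#|S|) h b1 b2 cs => x1 x2 x3; slia.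
Qed.

Lemma upper m1 m2 : #|~: cnbh v1| = m1 - 1 -> 0 < m1 -> components_P2 (~: cnbh v1) ->
  (forall x : G2, 2 <= deg x) -> (forall a : G2, exists T, tds_in [set~ a] T /\ #|T| < m2) ->
  gammat G <= m1 + m2 - 1.
Proof.
move=> c1 p1 P1 dg cr2.
have [x] : exists x, x \in nbh v2 by apply/card_gt0P; exact: leq_trans _ (dg v2).
rewrite inE => vx.
have [T [HT cT]] := cr2 x.
set S := f1 @: (~: cnbh v1) :|: (f2 @: T :|: [set f2 v2]).
apply: leq_trans (gammat_le (A:=setT) (S:=S) _) _.
  apply/tdsP; split; first exact: subsetT. move=> y _.
  have H2 b : exists2 s, s \in S & adj (f2 b) s.
    have [s sS h] := upper_side2 adj22 vx HT b. exists s => //. by rewrite /S inE sS orbT.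
  case: (GP y) => [[a ->]|[b _ ->]]; last exact: H2.
  case: (eqVneq a v1) => [->|av]; first by rewrite f1v -f2v; exact: H2.
  have [s sS h] := upper_side1 adj11 P1 av. exists s => //. move: sS; rewrite /S !inE.
  case/orP => [->//|/eqP ->]. by rewrite f1v -f2v eqxx !orbT.
have h1 := leq_imset_card f1 (~: cnbh v1). have h2 := leq_imset_card f2 T.
have h3 := cU (f1 @: (~: cnbh v1)) (f2 @: T :|: [set f2 v2]).
have h4 := cU (f2 @: T) [set f2 v2]. rewrite cards1 in h4.
rewrite /S. slia.
Qed.

Lemma crit_amal m1 m2 :
  (forall a : G1, exists T, tds_in [set~ a] T /\ #|T| < m1) ->
  (forall a : G2, exists T, tds_in [set~ a] T /\ #|T| < m2) ->
  forall x : G, exists S, tds_in [set~ x] S /\ #|S| < m1 + m2 - 1.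
Proof.
move=> cr1 cr2 x. case: (GP x) => [[a ->]|[b bv ->]].
- have [T1 [H1 c1]] := cr1 a. have [T2 [H2 c2]] := cr2 v2.
  exists (f1 @: T1 :|: f2 @: T2). split.
  + apply/tdsP; split.
    * apply/subsetP => s; rewrite !inE; case/orP => /imsetP [t tT ->].
      - by rewrite (inj_eq f1_inj) (crit_sub H1).
      - apply/eqP => /esym/f12_eq [_ e]. by have := crit_sub H2 tT; rewrite e eqxx.
    * move=> y; rewrite !inE => ya. case: (GP y) => [[c ec]|[c cv ec]]; subst y.
      - have ca : c != a by apply: contraNneq ya => ->.
        have [s sT h] := crit_side adj11 H1 ca. by exists s => //; rewrite inE sT.
      - have [s sT h] := crit_side adj22 H2 cv. by exists s => //; rewrite inE sT orbT.
  + have h1 := leq_imset_card f1 T1. have h2 := leq_imset_card f2 T2.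
    have h3 := cU (f1 @: T1) (f2 @: T2). slia.
- have [T1 [H1 c1]] := cr1 v1. have [T2 [H2 c2]] := cr2 b.
  exists (f1 @: T1 :|: f2 @: T2). split.
  + apply/tdsP; split.
    * apply/subsetP => s; rewrite !inE; case/orP => /imsetP [t tT ->].
      - apply/eqP => /f12_eq [e _]. by have := crit_sub H1 tT; rewrite e eqxx.
      - by rewrite (inj_eq f2_inj) (crit_sub H2).
    * move=> y; rewrite !inE => yb. case: (GP y) => [[c ec]|[c cv ec]]; subst y.
      - case: (eqVneq c v1) => [ecv|cv].
          subst c. have vb : v2 != b by rewrite eq_sym.
          have [s sT h] := crit_side adj22 H2 vb. exists s; last by rewrite f1v -f2v.
          by rewrite inE sT orbT.
        have [s sT h] := crit_side adj11 H1 cv. by exists s => //; rewrite inE sT.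
      - have cb : c != b by apply: contraNneq yb => ->.
        have [s sT h] := crit_side adj22 H2 cb. by exists s => //; rewrite inE sT orbT.
  + have h1 := leq_imset_card f1 T1. have h2 := leq_imset_card f2 T2.
    have h3 := cU (f1 @: T1) (f2 @: T2). slia.
Qed.

Lemma notin12 a : (f1 a \in f2 @: nbh v2) = false.
Proof.
apply/negbTE/negP => /imsetP [b hb /f12_eq [_ e]]. subst b. by rewrite inE adj_irr in hb.
Qed.
Lemma notin21 b : b != v2 -> (f2 b \in f1 @: nbh v1) = false.
Proof.
move=> bv; apply/negbTE/negP => /imsetP [a ha /esym /f12_eq [e _]]. subst a. by rewrite inE adj_irr in ha.
Qed.

Lemma deg_center : deg (f1 v1) = deg v1 + deg v2.
Proof.
have E : nbh (f1 v1) = f1 @: nbh v1 :|: f2 @: nbh v2.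
  apply/setP => y; rewrite [in LHS]inE [in RHS]inE.
  case: (GP y) => [[a ->]|[b bv ->]].
    by rewrite adj11 notin12 orbF (mem_imset _ _ f1_inj) inE.
  by rewrite f1v -f2v adj22 notin21 // (mem_imset _ _ f2_inj) inE.
have I : f1 @: nbh v1 :&: f2 @: nbh v2 = set0.
  apply/setP => y; rewrite !inE; apply/negbTE/negP => /andP [/imsetP [a _ ->]].
  by rewrite notin12.
rewrite /deg E cardsU I cards0 subn0 !card_imset //; [exact: f2_inj | exact: f1_inj].
Qed.

Lemma maxdeg_amal : deg v1 = maxdeg G1 -> deg v2 = maxdeg G2 -> maxdeg G = maxdeg G1 + maxdeg G2.
Proof.
move=> dv1 dv2.
apply/eqP; rewrite eqn_leq; apply/andP; split.
  apply/bigmax_leqP => y _. case: (GP y) => [[a ->]|[b bv ->]].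
    case: (eqVneq a v1) => [->|av]; first by rewrite deg_center dv1 dv2.
    apply: leq_trans (deg_side adj11 fother1 av) _.
    exact: leq_trans (leq_bigmax a) (leq_addr _ _).
  apply: leq_trans (deg_side adj22 fother2 bv) _.
  exact: leq_trans (leq_bigmax b) (leq_addl _ _).
rewrite -dv1 -dv2 -deg_center. exact: leq_bigmax.
Qed.

Lemma card_amal : #|G| = (#|G1|.-1 + #|G2|.-1).+1.
Proof.
rewrite card_option card_sum !card_sig. congr (_ + _).+1.
  by rewrite -(cardsC1 v1); apply: eq_card => x; rewrite !inE.
by rewrite -(cardsC1 v2); apply: eq_card => x; rewrite !inE.
Qed.

Lemma noiso_amal : (forall x : G1, 0 < deg x) -> (forall x : G2, 0 < deg x) -> no_isolated G.
Proof.
move=> n1 n2 y. case: (GP y) => [[a ->]|[b _ ->]].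
  have [c] : exists c, c \in nbh a by apply/card_gt0P; exact: n1.
  rewrite inE -adj11; exact: deg_gt0.
have [c] : exists c, c \in nbh b by apply/card_gt0P; exact: n2.
rewrite inE -adj22; exact: deg_gt0.
Qed.

End Amal.

Theorem mainTheorem2 (G1 G2 : graph) (m1 m2 : nat) (v1 : G1) (v2 : G2) :
  m_gt_critical G1 m1 -> #|G1| = maxdeg G1 + m1 ->
  (forall x : G1, 2 <= deg x) -> deg v1 = maxdeg G1 ->
  components_P2 (~: cnbh v1) ->
  m_gt_critical G2 m2 -> #|G2| = maxdeg G2 + m2 ->
  (forall x : G2, 2 <= deg x) -> deg v2 = maxdeg G2 ->
  components_P2 (~: cnbh v2) ->
  m_gt_critical (amalgamation v1 v2) (m1 + m2 - 1) /\
  #|amalgamation v1 v2| = maxdeg (amalgamation v1 v2) + (m1 + m2 - 1) /\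
  maxdeg (amalgamation v1 v2) = maxdeg G1 + maxdeg G2.
Proof.
move=> [[ni1 cr1] g1] card1 dg1 dv1 P1 [[ni2 cr2] g2] card2 dg2 dv2 P2.
have nl1 (a : G1) : forall u, adj a u -> ~~ is_leaf u.
  by move=> u _; rewrite /is_leaf neq_ltn (dg1 u) orbT.
have nl2 (a : G2) : forall u, adj a u -> ~~ is_leaf u.
  by move=> u _; rewrite /is_leaf neq_ltn (dg2 u) orbT.
have T1 (a : G1) : exists T, tds_in [set~ a] T /\ #|T| < m1.
  apply: gammat_lt; first by rewrite -g1; exact: cr1 a (nl1 a).
  rewrite cardsC1 prednK; last by apply/card_gt0P; exists a.
  by rewrite card1 leq_addl.
have T2 (a : G2) : exists T, tds_in [set~ a] T /\ #|T| < m2.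
  apply: gammat_lt; first by rewrite -g2; exact: cr2 a (nl2 a).
  rewrite cardsC1 prednK; last by apply/card_gt0P; exists a.
  by rewrite card2 leq_addl.
have p1 : 0 < m1 by have [T [_ h]] := T1 v1; exact: leq_ltn_trans (leq0n _) h.
have p2 : 0 < m2 by have [T [_ h]] := T2 v2; exact: leq_ltn_trans (leq0n _) h.
have c1 : #|~: cnbh v1| = m1 - 1.
  have e : #|cnbh v1| = (deg v1).+1 by rewrite /cnbh cardsU1 inE adj_irr /= add1n.
  have := cardsC (cnbh v1). rewrite e dv1 card1. slia.
have c2 : #|~: cnbh v2| = m2 - 1.
  have e : #|cnbh v2| = (deg v2).+1 by rewrite /cnbh cardsU1 inE adj_irr /= add1n.
  have := cardsC (cnbh v2). rewrite e dv2 card2. slia.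
have gG : gammat (amalgamation v1 v2) = m1 + m2 - 1.
  apply/eqP; rewrite eqn_leq; apply/andP; split.
    exact: upper c1 p1 P1 dg2 T2.
  apply: gammat_ge; first exact: lower g1 p1 c1 P1 g2 p2 c2 P2.
  rewrite cardsT card_amal card1 card2 -!subn1. slia.
split; first split; first split.
- exact: noiso_amal.
- move=> x _. have [S [HS cS]] := crit_amal T1 T2 x. rewrite gG.
  exact: leq_ltn_trans (gammat_le HS) cS.
- exact: gG.
split; last exact: maxdeg_amal.
rewrite card_amal maxdeg_amal // card1 card2 -!subn1. slia.
Qed.
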